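(* Let $\alpha$ be a graph function on a strongly connected digraph $G$, with heights $y$, levels $x$, momenta $m$ and raising imbalances $\rho_v=\rho^R_v$; let $y_{\min}=\min_u y_u$. For every vertex $v$: (i) $m_v\le\rho(S_v)+z_v$; (ii) $y_v-y_{\min}\le|S_v|\cdot\rho(S_v)$.
   Context: $G$ is a strongly connected directed graph (self-loops allowed); $u\to v$ means $(u,v)$ is an edge. A graph function assigns a real weight $\alpha_{uv}$ to each edge. $\alpha_v^{\text{in}}=\max_{u\to v}\alpha_{uv}$, $\alpha_v^{\text{out}}=\max_{v\to w}\alpha_{vw}$, $\rho^R_v=\max\{0,\alpha_v^{\text{out}}-\alpha_v^{\text{in}}\}$. A raising operation at $v$: if $\rho^R_v>0$ add $\rho^R_v/2$ to each incoming edge weight $\alpha_{uv}$ ($u\ne v$) and subtract it from each outgoing $\alpha_{vw}$ ($w\neq v$); otherwise do nothing. Starting from $\alpha$, for any infinite sequence of raising operations in which every vertex occurs infinitely often, the cumulative amount by which each vertex has been raised converges to a limit vector $r^*$ independent of the sequence, and the graph functions converge to the raising-balanced graph function $\alpha^R_{uv}=\alpha_{uv}+r^*_v-r^*_u$. Heights: $y_v=-r^*_v$. Levels: $x_v=\max_{u\to v}\alpha^R_{uv}$. Momentum: $m_v=\max_{u\to v}(\alpha_{uv}-x_v)$. $S_v=\{u: y_u<y_v\}$, $\rho(S_v)=\sum_{u\in S_v}\rho_u$, and $z_v=\max\{x_u: y_u\le y_v\}-x_v$. *)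

(* Defs.v *)
From HB Require Import structures.
From mathcomp Require Import all_boot all_order all_algebra.
From mathcomp Require Import all_classical all_reals.
From mathcomp Require Import all_analysis.
Import numFieldNormedType.Exports.
Set Implicit Arguments. Unset Strict Implicit. Unset Printing Implicit Defensive.
Import Order.TTheory GRing.Theory Num.Theory.
Local Open Scope classical_set_scope.
Local Open Scope ring_scope.

Section Graphs.
Variables (R : realType) (V : finType) (E : rel V).

(* maximum / minimum of a finite list (0 on the empty list; only ever used
   on nonempty lists in the statement) *)
Definition maxs (s : seq R) : R := foldr Num.max (head 0 s) s.
Definition mins (s : seq R) : R := foldr Num.min (head 0 s) s.

Definition strongly_connected : Prop := forall u v : V, connect E u v.

Definition alpha_in (a : V -> V -> R) (v : V) : R :=
  maxs [seq a u v | u <- enum V & E u v].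
Definition alpha_out (a : V -> V -> R) (v : V) : R :=
  maxs [seq a v w | w <- enum V & E v w].

Definition rhoR (a : V -> V -> R) (v : V) : R :=
  Num.max 0 (alpha_out a v - alpha_in a v).

Definition raise (a : V -> V -> R) (v : V) : V -> V -> R :=
  fun p q => a p q
    + (if (q == v) && (p != v) then rhoR a v / 2 else 0)
    - (if (p == v) && (q != v) then rhoR a v / 2 else 0).

Fixpoint raise_state (a : V -> V -> R) (s : nat -> V) (n : nat) : V -> V -> R :=
  match n with
  | 0 => a
  | n'.+1 => raise (raise_state a s n') (s n')
  end.

Definition cum_raise (a : V -> V -> R) (s : nat -> V) (n : nat) (v : V) : R :=
  \sum_(k < n | s k == v) rhoR (raise_state a s k) v / 2.

Definition fair (s : nat -> V) : Prop :=
  forall (v : V) (N : nat), exists2 n, (N <= n)%N & s n = v.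

Definition is_raising_limit (a : V -> V -> R) (r : V -> R) : Prop :=
  forall s : nat -> V, fair s ->
    forall v : V, (fun n => cum_raise a s n v) @ \oo --> r v.

Definition alphaR (a : V -> V -> R) (r : V -> R) : V -> V -> R :=
  fun u v => a u v + r v - r u.

Definition height (r : V -> R) (v : V) : R := - r v.
Definition level (a : V -> V -> R) (r : V -> R) (v : V) : R :=
  alpha_in (alphaR a r) v.
Definition momentum (a : V -> V -> R) (r : V -> R) (v : V) : R :=
  maxs [seq a u v - level a r v | u <- enum V & E u v].
Definition Sset (r : V -> R) (v : V) : {set V} :=
  [set u | height r u < height r v].
Definition rhoS (a : V -> V -> R) (r : V -> R) (v : V) : R :=
  \sum_(u in Sset r v) rhoR a u.
Definition zval (a : V -> V -> R) (r : V -> R) (v : V) : R :=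
  maxs [seq level a r u | u <- enum V & height r u <= height r v]
  - level a r v.
Definition ymin (r : V -> R) : R := mins [seq height r u | u <- enum V].

End Graphs.

(* Main.v *)
Require Import Defs.
From HB Require Import structures.
From mathcomp Require Import all_boot all_order all_algebra.
From mathcomp Require Import all_classical all_reals.
From mathcomp Require Import all_analysis.
From mathcomp Require Import lra.
Import numFieldNormedType.Exports.
Import Order.TTheory GRing.Theory Num.Theory.
Set Implicit Arguments. Unset Strict Implicit. Unset Printing Implicit Defensive.
Local Open Scope ring_scope.

Section Lists.
Variable R : realType.

Lemma foldr_max_ge (x0 : R) (t : seq R) :
  x0 <= foldr Num.max x0 t /\ forall y, y \in t -> y <= foldr Num.max x0 t.
Proof.
elim: t => [|x t [IH1 IH2]] /=; first by split.
split; first by rewrite le_max IH1 orbT.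
move=> y; rewrite inE => /orP[/eqP->|/IH2 H]; rewrite le_max ?lexx //.
by rewrite H orbT.
Qed.

Lemma foldr_max_in (x0 : R) (t : seq R) : foldr Num.max x0 t \in x0 :: t.
Proof.
elim: t => [|x t IH] /=; first by rewrite inE.
rewrite /Num.max; case: ifP => _.
  by move: IH; rewrite !inE => /orP[->|->]; rewrite ?orbT.
by rewrite !inE eqxx orbT.
Qed.

Lemma maxs_ge (s : seq R) y : y \in s -> y <= maxs s.
Proof. by rewrite /maxs => ys; case: (foldr_max_ge (head 0 s) s) => _; apply. Qed.

Lemma maxs_in (s : seq R) : s != [::] -> maxs s \in s.
Proof.
rewrite /maxs; case: s => [//|h t] _ /=.
have := foldr_max_in h (h :: t); rewrite /= => H.
by move: H; rewrite inE => /orP[/eqP->|//]; rewrite mem_head.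
Qed.

Lemma maxs_le (s : seq R) b : s != [::] -> (forall y, y \in s -> y <= b) -> maxs s <= b.
Proof. by move=> /maxs_in H1 H2; apply: H2. Qed.

Lemma foldr_min_le (x0 : R) (t : seq R) :
  forall y, y \in t -> foldr Num.min x0 t <= y.
Proof.
elim: t => [|x t IH] //= y; rewrite inE => /orP[/eqP->|/IH H]; rewrite ge_min ?lexx //.
by rewrite H orbT.
Qed.

Lemma foldr_min_in (x0 : R) (t : seq R) : foldr Num.min x0 t \in x0 :: t.
Proof.
elim: t => [|x t IH] /=; first by rewrite inE.
rewrite /Num.min; case: ifP => _; first by rewrite !inE eqxx orbT.
by move: IH; rewrite !inE => /orP[->|->]; rewrite ?orbT.
Qed.

Lemma mins_in (s : seq R) : s != [::] -> mins s \in s.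
Proof.
rewrite /mins; case: s => [//|h t] _ /=.
have := foldr_min_in h (h :: t); rewrite /= => H.
by move: H; rewrite inE => /orP[/eqP->|//]; rewrite mem_head.
Qed.

End Lists.

Section Basic.
Variables (R : realType) (V : finType) (E : rel V).
Hypothesis hin : forall v : V, exists u : V, E u v.
Hypothesis hout : forall v : V, exists w : V, E v w.

Lemma in_ge (b : V -> V -> R) u v : E u v -> b u v <= alpha_in E b v.
Proof. by move=> Euv; apply: maxs_ge; apply: map_f; rewrite mem_filter Euv mem_enum. Qed.

Lemma out_ge (b : V -> V -> R) v w : E v w -> b v w <= alpha_out E b v.
Proof. by move=> Evw; apply: maxs_ge; apply: map_f; rewrite mem_filter Evw mem_enum. Qed.

Lemma in_att (b : V -> V -> R) v : exists u, E u v /\ b u v = alpha_in E b v.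
Proof.
have: alpha_in E b v \in [seq b u v | u <- enum V & E u v].
  apply: maxs_in; case: (hin v) => u Euv.
  apply/eqP => H; have : b u v \in [seq b u v | u <- enum V & E u v].
    by apply: map_f; rewrite mem_filter Euv mem_enum.
  by rewrite H.
by case/mapP => u; rewrite mem_filter => /andP[Euv _] ->; exists u.
Qed.

Lemma out_att (b : V -> V -> R) v : exists w, E v w /\ b v w = alpha_out E b v.
Proof.
have: alpha_out E b v \in [seq b v w | w <- enum V & E v w].
  apply: maxs_in; case: (hout v) => w Evw.
  apply/eqP => H; have : b v w \in [seq b v w | w <- enum V & E v w].
    by apply: map_f; rewrite mem_filter Evw mem_enum.
  by rewrite H.
by case/mapP => w; rewrite mem_filter => /andP[Evw _] ->; exists w.
Qed.

Lemma rho_ge0 (b : V -> V -> R) v : 0 <= rhoR E b v.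
Proof. by rewrite /rhoR le_max lexx. Qed.

Lemma rho_ge (b : V -> V -> R) v : alpha_out E b v - alpha_in E b v <= rhoR E b v.
Proof. by rewrite /rhoR le_max lexx orbT. Qed.

Definition balanced (a : V -> V -> R) (c : V -> R) := forall v, exists u, E u v /\
  forall w, E v w -> alphaR a c v w <= alphaR a c u v.
End Basic.

Section Core.
Variables (R : realType) (V : finType) (E : rel V) (a : V -> V -> R) (r : V -> R).
Hypothesis hin : forall v : V, exists u : V, E u v.
Hypothesis hout : forall v : V, exists w : V, E v w.
Hypothesis r0 : forall v, 0 <= r v.
Hypothesis hbal : balanced E a r.

Local Notation ar := (alphaR a r).
Local Notation x := (level E a r).

Lemma bal_le_level v w : E v w -> ar v w <= x v.
Proof.
move=> Evw; case: (hbal v) => u [Euv H].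
by apply: le_trans (H w Evw) _; apply: in_ge.
Qed.

Lemma sum_split_le (P Q : pred V) (u : V) :
  (forall t, Q t -> P t) -> P u -> ~~ Q u ->
  \sum_(t | Q t) rhoR E a t + rhoR E a u <= \sum_(t | P t) rhoR E a t.
Proof.
move=> QP Pu Qu.
rewrite [X in X + _]big_mkcond [X in _ <= X]big_mkcond /=.
have -> : rhoR E a u = \sum_(t | t == u) rhoR E a t by rewrite big_pred1_eq.
rewrite [X in _ + X]big_mkcond /= -big_split /=.
apply: ler_sum => t _.
case: (eqVneq t u) => [->|ntu]; first by rewrite (negbTE Qu) Pu add0r.
rewrite addr0; case Qt: (Q t); first by rewrite (QP _ Qt).
by case: (P t); rewrite ?lexx ?rho_ge0.
Qed.

Lemma chainK n : forall u, (#|[set t | (r u < r t)%R]| <= n)%N ->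
  forall w Mv, E u w -> (forall t, r u <= r t -> x t <= Mv) ->
  a u w <= \sum_(t | r u <= r t) rhoR E a t + Mv.
Proof.
elim: n => [|n IH] u hc w Mv Euw HM.
all: have h1 : a u w <= a u w by [].
all: case: (in_att hin a u) => p [Epu hp].
all: have h2 : a u w <= a p u + rhoR E a u.
all: try (apply: le_trans (out_ge a Euw) _; rewrite hp -lerBlDl; exact: rho_ge).
all: case: (leP (r p) (r u)) => hpu.
- apply: le_trans h2 _; rewrite addrC lerD //.
  + have := sum_split_le (P := fun t => r u <= r t) (Q := pred0) (u := u).
    by rewrite big_pred0_eq add0r; apply.
  + apply: le_trans (HM u (lexx _)); apply: le_trans (in_ge _ Epu).
    by rewrite /alphaR -addrA lerDl subr_ge0.
- by move: hc; rewrite leqn0 => /eqP/card0_eq/(_ p); rewrite !inE hpu.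
- apply: le_trans h2 _; rewrite addrC lerD //.
  + have := sum_split_le (P := fun t => r u <= r t) (Q := pred0) (u := u).
    by rewrite big_pred0_eq add0r; apply.
  + apply: le_trans (HM u (lexx _)); apply: le_trans (in_ge _ Epu).
    by rewrite /alphaR -addrA lerDl subr_ge0.
- have hc' : (#|[set t | (r p < r t)%R]| <= n)%N.
    rewrite -ltnS; apply: leq_trans _ hc; apply: proper_card; apply/properP; split.
      by apply/fintype.subsetP => t; rewrite !inE; apply: lt_trans.
    by exists p; rewrite !inE ?ltxx.
  have := IH p hc' u Mv Epu (fun t h => HM t (le_trans (ltW hpu) h)).
  move=> h3; apply: le_trans h2 _; apply: le_trans (lerD h3 (lexx _)) _.
  rewrite addrAC lerD2r; apply: sum_split_le => //.
  + by move=> t; apply: le_trans (ltW hpu).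
  + by rewrite -ltNge.
Qed.
End Core.

Section Part1.
Variables (R : realType) (V : finType) (E : rel V) (a : V -> V -> R) (r : V -> R).
Hypothesis hin : forall v : V, exists u : V, E u v.
Hypothesis hout : forall v : V, exists w : V, E v w.
Hypothesis r0 : forall v, 0 <= r v.
Hypothesis hbal : balanced E a r.
Local Notation x := (level E a r).

Lemma sum_sub_le (P Q : pred V) :
  (forall t, P t -> Q t) -> \sum_(t | P t) rhoR E a t <= \sum_(t | Q t) rhoR E a t.
Proof.
move=> PQ; rewrite big_mkcond [X in _ <= X]big_mkcond /=; apply: ler_sum => t _.
case Pt: (P t); first by rewrite (PQ _ Pt).
by case: (Q t); rewrite ?lexx ?rho_ge0.
Qed.

Lemma inS v t : (t \in Sset r v) = (r v < r t).
Proof. by rewrite inE /height ltrN2. Qed.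

Lemma rhoS_ge0 v : 0 <= rhoS E a r v.
Proof. by apply: sumr_ge0 => t _; apply: rho_ge0. Qed.


Lemma part1 v : momentum E a r v <= rhoS E a r v + zval E a r v.
Proof.
set Z := maxs [seq x u | u <- enum V & height r u <= height r v].
have HZ : forall t, r v <= r t -> x t <= Z.
  move=> t h; apply: maxs_ge; apply: map_f.
  by rewrite mem_filter mem_enum andbT /height lerN2.
rewrite /zval -/Z addrA.
apply: maxs_le.
  case: (hin v) => u Euv; apply/eqP => H.
  have : a u v - x v \in [seq a u v - x v | u <- enum V & E u v].
    by apply: map_f; rewrite mem_filter Euv mem_enum.
  by rewrite H.
move=> y /mapP[u]; rewrite mem_filter => /andP[Euv _] ->.
rewrite lerD2r.
case: (leP (r u) (r v)) => huv.
- rewrite -[a u v]add0r lerD //; first exact: rhoS_ge0.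
  apply: le_trans (HZ v (lexx _)); apply: le_trans (in_ge _ Euv).
  by rewrite /alphaR -addrA lerDl subr_ge0.
- rewrite addrC; apply: le_trans (chainK hin (leqnn _) Euv _) _.
    by move=> t h; apply: HZ; apply: le_trans (ltW huv) h.
  rewrite addrC lerD2r /rhoS; apply: sum_sub_le => t.
  by rewrite inS; apply: lt_le_trans.
Qed.
End Part1.

Lemma exists_eps (R : realType) (T : finType) (Q : T -> R -> Prop) :
  (forall t, exists2 e, 0 < e & forall e', 0 < e' -> e' <= e -> Q t e') ->
  exists2 e, 0 < e & forall t, Q t e.
Proof.
move=> H.
have : forall s : seq T, exists2 e, 0 < e &
    forall t, t \in s -> forall e', 0 < e' -> e' <= e -> Q t e'.
  elim=> [|t s [e1 e1p IH]]; first by exists 1.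
  case: (H t) => e2 e2p H2.
  exists (Num.min e1 e2); first by rewrite lt_min e1p e2p.
  move=> t'; rewrite inE => /orP[/eqP->|ts] e' e'p; rewrite le_min => /andP[h1 h2].
  - exact: H2.
  - exact: IH.
case/(_ (enum T)) => e ep He; exists e => // t; apply: He => //; rewrite ?mem_enum ?lexx //.
Qed.

Lemma connect_dec (T : finType) (e : rel T) u w :
  connect e u w -> u = w \/ exists2 z, e u z & connect e z w.
Proof.
case/connectP => [[|z s]] /=; first by move=> _ ->; left.
move=> /andP[euz pz] ->; right; exists z => //; apply/connectP; by exists s.
Qed.

Section Rigid.
Variables (R : realType) (V : finType) (E : rel V) (a : V -> V -> R) (r : V -> R).
Hypothesis hin : forall v : V, exists u : V, E u v.
Hypothesis hout : forall v : V, exists w : V, E v w.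
Hypothesis r0 : forall v, 0 <= r v.
Hypothesis hbal : balanced E a r.
Hypothesis hleast : forall c : V -> R, (forall t, 0 <= c t) -> balanced E a c ->
  forall t, r t <= c t.
Local Notation ar := (alphaR a r).
Local Notation x := (level E a r).

Variable v : V.
Hypothesis hA : exists t, r v < r t.
Let L := maxs [seq x t | t <- enum V & r v < r t].

Lemma L_ge t : r v < r t -> x t <= L.
Proof. by move=> h; apply: maxs_ge; apply: map_f; rewrite mem_filter h mem_enum. Qed.

Lemma L_att : exists2 t, r v < r t & x t = L.
Proof.
have: L \in [seq x t | t <- enum V & r v < r t].
  apply: maxs_in; case: hA => t ht; apply/eqP => H.
  have : x t \in [seq x t | t <- enum V & r v < r t].
    by apply: map_f; rewrite mem_filter ht mem_enum.
  by rewrite H.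
by case/mapP => t; rewrite mem_filter => /andP[ht _] ->; exists t.
Qed.

Lemma sink : exists s, [/\ r v < r s, x s = L &
  exists b, [/\ E s b, r b <= r v & ar s b = L]].
Proof.
apply: contrapT => NS.
have NS' : forall s b, r v < r s -> x s = L -> E s b -> ar s b = L -> r v < r b.
  move=> s b h1 h2 h3 h4; rewrite ltNge; apply/negP => h5; apply: NS.
  by exists s; split => //; exists b.
pose inX t := (r v < r t) && (x t == L).
pose D : rel V := fun p q => [&& inX p, inX q, E p q & ar p q == L].
pose Dr : rel V := fun p q => D q p.
pose anc q := [set u | [exists p, D p q && connect Dr p u]].
pose phi t : R := if inX t then 2 ^+ #|anc t| else 0.
have A1 : forall q w, D q w -> anc q \subset anc w.
  move=> q w Dqw; apply/fintype.subsetP => u; rewrite !inE => /existsP[p /andP[Dpq cpu]].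
  apply/existsP; exists q; rewrite Dqw /=; apply: connect_trans cpu.
  by apply: connect1.
have A2 : forall q w, D q w -> q \in anc w.
  by move=> q w Dqw; rewrite inE; apply/existsP; exists q; rewrite Dqw connect0.
have A3 : forall q, q \in anc q -> exists2 p, D p q & anc q \subset anc p.
  move=> q; rewrite inE => /existsP[p /andP[Dpq cpq]]; exists p => //.
  apply/fintype.subsetP => u; rewrite !inE => /existsP[p' /andP[Dp'q cp'u]].
  apply/existsP; case: (connect_dec cpq) => [eqpq|[z Dpz czq]].
  - by exists p'; rewrite -eqpq in Dp'q; rewrite Dp'q.
  - exists z; apply/andP; split; first exact: Dpz; apply: connect_trans czq _.
    by apply: connect_trans _ cp'u; apply: connect1.
have DX1 : forall q w, D q w -> inX q by move=> q w /and4P[].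
have DX2 : forall q w, D q w -> inX w by move=> q w /and4P[].
have phi0 : forall t, 0 <= phi t.
  by move=> t; rewrite /phi; case: ifP => _ //; apply: exprn_ge0.
have phiX : forall t, inX t -> phi t = 2 ^+ #|anc t| by move=> t h; rewrite /phi h.
have phiNX : forall t, ~~ inX t -> phi t = 0 by move=> t h; rewrite /phi (negbTE h).
pose Phi : R := 2 ^+ #|V|.
have Phi0 : 0 < Phi by apply: exprn_gt0.
have PhiB : forall t, phi t <= Phi.
  move=> t; rewrite /phi; case: ifP => _; last exact: ltW.
  by rewrite ler_eXn2l ?ltr1n //; apply: max_card.
have B2 : forall q w, D q w -> phi q <= phi w.
  move=> q w Dqw; rewrite (phiX _ (DX1 _ _ Dqw)) (phiX _ (DX2 _ _ Dqw)).
  by rewrite ler_eXn2l ?ltr1n //; apply: subset_leq_card; apply: A1.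
have B1 : forall q w, D q w -> q \notin anc q -> 2 * phi q <= phi w.
  move=> q w Dqw nq; rewrite (phiX _ (DX1 _ _ Dqw)) (phiX _ (DX2 _ _ Dqw)).
  rewrite -exprS ler_eXn2l ?ltr1n //; apply: proper_card; apply/properP; split.
    exact: A1.
  by exists q => //; apply: A2.
have Hu : forall q, inX q -> exists u, [/\ E u q, ar u q = L &
    forall w, D q w -> 2 * phi q <= phi u + phi w].
  move=> q Xq; case: (boolP (q \in anc q)) => hq.
  - case: (A3 q hq) => p Dpq sub; exists p; split.
    + by case/and4P: Dpq.
    + by case/and4P: Dpq => _ _ _ /eqP.
    + move=> w Dqw; have h1 := B2 _ _ Dqw.
      have h2 : phi q <= phi p.
        rewrite (phiX _ (DX1 _ _ Dpq)) (phiX _ Xq).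
        by rewrite ler_eXn2l ?ltr1n //; apply: subset_leq_card.
      lra.
  - case: (in_att hin (alphaR a r) q) => u [Euq hu]; exists u; split => //.
      by rewrite hu; case/andP: Xq => _ /eqP.
    move=> w Dqw; have := B1 _ _ Dqw hq; have := phi0 u; lra.
pose Q (pr : V * V) (e : R) :=
  ((inX pr.1 && E pr.1 pr.2 && (ar pr.1 pr.2 < L)) -> 2 * e * Phi <= L - ar pr.1 pr.2)
  /\ (inX pr.1 -> e * Phi <= r pr.1).
have [e ep He] : exists2 e, 0 < e & forall pr, Q pr e.
  apply: exists_eps => -[q w] /=.
  pose d1 := if inX q && E q w && (ar q w < L) then (L - ar q w) / (2 * Phi) else 1.
  pose d2 := if inX q then r q / Phi else 1.
  have d1p : 0 < d1.
    rewrite /d1; case: ifP => // /andP[_ h]; apply: divr_gt0; lra.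
  have d2p : 0 < d2.
    rewrite /d2; case: ifP => // /andP[h _]; apply: divr_gt0 => //.
    by apply: le_lt_trans h.
  exists (Num.min d1 d2); first by rewrite lt_min d1p d2p.
  move=> e' e'p; rewrite le_min => /andP[h1 h2]; split => /= H.
  - move: h1; rewrite /d1 H ler_pdivlMr; last lra.
    move=> h; lra.
  - by move: h2; rewrite /d2 H ler_pdivlMr.
pose r' t := r t - e * phi t.
have ephi0 : forall t, 0 <= e * phi t by move=> t; apply: mulr_ge0; [lra|].
have ephiB : forall t, e * phi t <= e * Phi by move=> t; apply: ler_wpM2l; [lra|].
have r'0 : forall t, 0 <= r' t.
  move=> t; rewrite /r'; case: (boolP (inX t)) => Xt.
  - have [_ /(_ Xt) h] := He (t, t); have := ephiB t; rewrite /= in h; lra.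
  - by rewrite phiNX // mulr0 subr0.
have bal' : balanced E a r'.
  move=> q; rewrite /alphaR /r'; case: (boolP (inX q)) => Xq.
  - case: (Hu q Xq) => u [Euq aruq Hw]; exists u; split => // w Eqw.
    have hle := bal_le_level hbal Eqw.
    have xq : x q = L by case/andP: Xq => _ /eqP.
    rewrite xq in hle; move: aruq hle; rewrite /alphaR => aruq hle.
    case: (ltP (a q w + r w - r q) L) => hlt.
    + have [/(_ _) h _] := He (q, w); rewrite /= Xq Eqw /alphaR hlt in h.
      have h' := h isT.
      have := ephiB w; have := ephiB q; have := ephiB u.
      have := ephi0 w; have := ephi0 q; have := ephi0 u.
      have : e * Phi * 2 = 2 * e * Phi by rewrite mulrC mulrA.
      lra.
    + have eqL : a q w + r w - r q = L by apply: le_anti; rewrite hle hlt.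
      have Dqw : D q w.
        have rw : r v < r w.
          by case/andP: Xq => hq _; exact: (NS' q w hq xq Eqw eqL).
        have xw : x w = L.
          apply: le_anti; rewrite L_ge //=; rewrite -eqL.
          by apply: (in_ge (fun y z => a y z + r z - r y) Eqw).
        apply/and4P; split => //; first by rewrite /inX rw xw eqxx.
        by apply/eqP; exact: eqL.
      have := Hw w Dqw => hh.
      have : e * (2 * phi q) <= e * (phi u + phi w) by apply: ler_wpM2l; [lra|].
      rewrite mulrDr; have : e * (2 * phi q) = 2 * (e * phi q) by rewrite mulrCA.
      lra.
  - case: (hbal q) => u [Euq H]; exists u; split => // w Eqw.
    have := H w Eqw; rewrite /alphaR (phiNX q Xq) mulr0 subr0.
    have := ephi0 w; have := ephi0 u; lra.
case: L_att => a1 h1 h2.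
have Xa1 : inX a1 by rewrite /inX h1 h2 eqxx.
have := hleast r'0 bal' a1; rewrite /r' (phiX _ Xa1).
have : 0 < e * 2 ^+ #|anc a1| by apply: mulr_gt0 => //; apply: exprn_gt0.
lra.
Qed.

End Rigid.

Section Part2.
Variables (R : realType) (V : finType) (E : rel V) (a : V -> V -> R) (r : V -> R).
Hypothesis hin : forall v : V, exists u : V, E u v.
Hypothesis hout : forall v : V, exists w : V, E v w.
Hypothesis r0 : forall v, 0 <= r v.
Hypothesis hbal : balanced E a r.
Hypothesis hleast : forall c : V -> R, (forall t, 0 <= c t) -> balanced E a c ->
  forall t, r t <= c t.

Lemma gap v : (exists t, r v < r t) ->
  exists2 s, r v < r s & r s - r v <= rhoS E a r v.
Proof.
move=> hA.
case: (sink hin r0 hbal hleast hA) => s [hs xs [b [Esb hb arsb]]].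
exists s => //.
have := chainK hin (leqnn _) Esb (fun t h => L_ge E a (lt_le_trans hs h)).
move=> h.
have h2 : \sum_(t | r s <= r t) rhoR E a t <= rhoS E a r v.
  by apply: sum_sub_le => t; rewrite inS; apply: lt_le_trans.
move: arsb; rewrite /alphaR => arsb.
lra.
Qed.

Lemma part2_aux n : forall v, (#|Sset r v| <= n)%N ->
  forall u, r u - r v <= (#|Sset r v|)%:R * rhoS E a r v.
Proof.
elim: n => [|n IH] v hc u.
all: have h0 : 0 <= (#|Sset r v|)%:R * rhoS E a r v
  by apply: mulr_ge0; [rewrite ler0n | apply: rhoS_ge0].
all: case: (leP (r u) (r v)) => huv; first by lra.
- by move: hc; rewrite leqn0 => /eqP/card0_eq/(_ u); rewrite inS huv.
- case: (gap (ex_intro _ u huv)) => s hs hgap.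
  have hsub : (#|Sset r s| < #|Sset r v|)%N.
    apply: proper_card; apply/properP; split.
      by apply/fintype.subsetP => t; rewrite !inS; apply: lt_trans.
    by exists s; rewrite !inS ?ltxx.
  have hcs : (#|Sset r s| <= n)%N by rewrite -ltnS; apply: leq_trans hsub hc.
  have := IH s hcs u => hIH.
  have hrs : rhoS E a r s <= rhoS E a r v.
    by apply: sum_sub_le => t; rewrite !inS; apply: lt_trans.
  have hk : ((#|Sset r s|.+1)%:R : R) <= #|Sset r v|%:R by rewrite ler_nat.
  move: hk; rewrite -addn1 natrD mulr1n => hk.
  have hk0 : (0 : R) <= #|Sset r s|%:R by rewrite ler0n.
  have p1 : #|Sset r s|%:R * rhoS E a r s <= #|Sset r s|%:R * rhoS E a r v.
    by apply: ler_wpM2l.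
  have p2 : (#|Sset r s|%:R + 1) * rhoS E a r v <= #|Sset r v|%:R * rhoS E a r v.
    by apply: ler_wpM2r => //; apply: rhoS_ge0.
  move: p2; rewrite mulrDl mul1r => p2.
  lra.
Qed.

Lemma part2 v : height r v - ymin r <= (#|Sset r v|)%:R * rhoS E a r v.
Proof.
have : ymin r \in [seq height r u | u <- enum V].
  apply: mins_in; apply/eqP => H.
  have : height r v \in [seq height r u | u <- enum V] by apply: map_f; rewrite mem_enum.
  by rewrite H.
case/mapP => u _ ->; rewrite /height.
have := @part2_aux _ v (leqnn _) u; lra.
Qed.
End Part2.

Local Open Scope classical_set_scope.
Local Open Scope ring_scope.

Lemma cvg_eps (R : realType) (u : nat -> R) l :
  u @ \oo --> l -> forall e, 0 < e -> exists N, forall n, (N <= n)%N -> `|l - u n| <= e.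
Proof.
move=> /cvgrPdist_le H e e0; case: (H e e0) => N _ HN.
by exists N => n Nn; apply: HN.
Qed.

Lemma lim_le (R : realType) (u : nat -> R) l b :
  u @ \oo --> l -> (forall n, u n <= b) -> l <= b.
Proof.
move=> cu ub; apply/ler_addgt0Pr => e e0.
case: (cvg_eps cu e0) => N HN; have := HN N (leqnn _); rewrite ler_norml.
have := ub N; lra.
Qed.

Lemma lim_ge (R : realType) (u : nat -> R) l b :
  u @ \oo --> l -> (forall n, b <= u n) -> b <= l.
Proof.
move=> cu ub; apply/ler_addgt0Pr => e e0.
case: (cvg_eps cu e0) => N HN; have := HN N (leqnn _); rewrite ler_norml.
have := ub N; lra.
Qed.

Lemma lim_nd (R : realType) (u : nat -> R) l :
  u @ \oo --> l -> (forall n, u n <= u n.+1) -> forall n, u n <= l.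
Proof.
move=> cu nd n.
have hom : forall m k, (m <= k)%N -> u m <= u k.
  move=> m k /subnKC <-; elim: (k - m)%N => [|j IH]; first by rewrite addn0.
  by apply: le_trans IH _; rewrite addnS; apply: nd.
apply/ler_addgt0Pr => e e0.
case: (cvg_eps cu e0) => N HN; have := HN (maxn N n) (leq_maxl _ _); rewrite ler_norml.
have := hom n (maxn N n) (leq_maxr _ _); lra.
Qed.

Lemma exists_N (T : finType) (P : T -> nat -> Prop) :
  (forall t, exists N, forall n, (N <= n)%N -> P t n) ->
  exists N, forall t n, (N <= n)%N -> P t n.
Proof.
move=> H.
have : forall s : seq T, exists N, forall t, t \in s -> forall n, (N <= n)%N -> P t n.
  elim=> [|t s [N1 IH]]; first by exists 0%N.
  case: (H t) => N2 H2; exists (maxn N1 N2) => t'; rewrite inE => /orP[/eqP->|ts] n.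
  - by rewrite geq_max => /andP[_ h]; apply: H2.
  - by rewrite geq_max => /andP[h _]; apply: IH.
by case/(_ (enum T)) => N HN; exists N => t n hn; apply: HN; rewrite ?mem_enum.
Qed.

Section Dyn.
Variables (R : realType) (V : finType) (E : rel V) (a : V -> V -> R).
Hypothesis hin : forall v : V, exists u : V, E u v.
Hypothesis hout : forall v : V, exists w : V, E v w.

Lemma cum_step (s : nat -> V) n w :
  cum_raise E a s n.+1 w = cum_raise E a s n w +
    (if s n == w then rhoR E (raise_state E a s n) w / 2 else 0).
Proof. by rewrite /cum_raise big_mkcond big_ord_recr /= -big_mkcond. Qed.

Lemma cum0 (s : nat -> V) w : cum_raise E a s 0 w = 0.
Proof. by rewrite /cum_raise big_ord0. Qed.

Lemma state_eq (s : nat -> V) n : raise_state E a s n = alphaR a (cum_raise E a s n).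
Proof.
elim: n => [|n IH].
  by apply: funext => p; apply: funext => q; rewrite /= /alphaR !cum0 subr0 addr0.
rewrite /= IH; apply: funext => p; apply: funext => q.
rewrite /raise /alphaR !cum_step IH.
case: (eqVneq q (s n)) => [->|nq]; case: (eqVneq p (s n)) => [->|np];
  rewrite ?eqxx /= ?(negbTE nq) ?(negbTE np) ?(eq_sym (s n)) ?(negbTE nq) ?(negbTE np) /=.
all: lra.
Qed.

Lemma cum_ge0 (s : nat -> V) n w : 0 <= cum_raise E a s n w.
Proof.
by apply: sumr_ge0 => k _; apply: divr_ge0 => //; apply: rho_ge0.
Qed.

Lemma cum_nd (s : nat -> V) n w : cum_raise E a s n w <= cum_raise E a s n.+1 w.
Proof.
rewrite cum_step lerDl; case: ifP => _ //.
by apply: divr_ge0 => //; apply: rho_ge0.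
Qed.

Lemma mono (c r' : V -> R) v : (forall t, c t <= r' t) -> balanced E a r' ->
  c v + rhoR E (alphaR a c) v / 2 <= r' v.
Proof.
move=> cr bal.
have h1 : rhoR E (alphaR a c) v <= 2 * (r' v - c v).
  rewrite /rhoR ge_max; apply/andP; split; first by have := cr v; lra.
  case: (out_att hout (alphaR a c) v) => w [Evw <-].
  case: (bal v) => u [Euv Hb].
  have := in_ge (alphaR a c) Euv; have := Hb w Evw.
  rewrite /alphaR; have := cr w; have := cr u; lra.
lra.
Qed.

End Dyn.

Lemma fair_rr (V : finType) (v0 : V) : fair (fun n => nth v0 (enum V) (n %% #|V|)).
Proof.
move=> w N.
have cp : (0 < #|V|)%N by apply/card_gt0P; exists v0.
have iw : (index w (enum V) < #|V|)%N by rewrite cardE index_mem mem_enum.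
exists (N * #|V| + index w (enum V))%N.
  by apply: leq_trans (leq_addr _ _); apply: leq_pmulr.
by rewrite modnMDl modn_small // nth_index // mem_enum.
Qed.

Unset Implicit Arguments.
Theorem lemma6 (R : realType) (V : finType) (E : rel V)
  (a : V -> V -> R) (r : V -> R)
  (hsc : strongly_connected E)
  (hin : forall v : V, exists u : V, E u v)
  (hr : is_raising_limit E a r) :
  forall v : V,
    momentum E a r v <= rhoS E a r v + zval E a r v /\
    height r v - ymin r <= (#|Sset r v|)%:R * rhoS E a r v.
Proof.
move=> v0.
have hout : forall v : V, exists w : V, E v w.
  move=> v; case: (hin v) => u Euv.
  case: (connect_dec (hsc v u)) => [evu|[z Evz _]]; last by exists z.
  by exists v; move: Euv; rewrite -evu.
pose s := fun n => nth v0 (enum V) (n %% #|V|).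
have fs : fair s by apply: fair_rr.
pose c := cum_raise E a s.
have cv : forall w, (fun n => c n w) @ \oo --> r w by move=> w; apply: hr.
have r0 : forall w, 0 <= r w.
  by move=> w; apply: (lim_ge (cv w)) => n; apply: cum_ge0.
have cle : forall n w, c n w <= r w.
  by move=> n w; apply: (lim_nd (cv w)) => m; apply: cum_nd.
have hleast : forall r' : V -> R, (forall t, 0 <= r' t) -> balanced E a r' ->
    forall t, r t <= r' t.
  move=> r' r'0 bal t.
  have H : forall n w, c n w <= r' w.
    elim=> [|n IH] w; first by rewrite /c cum0.
    rewrite /c cum_step; case: eqP => [<-|_]; last by rewrite addr0; apply: IH.
    by rewrite state_eq; apply: mono.
  by apply: (lim_le (cv t)) => n; apply: H.
have hbal : balanced E a r.
  have oi : forall v, alpha_out E (alphaR a r) v <= alpha_in E (alphaR a r) v.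
    move=> v; apply/ler_addgt0Pr => e' e'0.
    pose e := e' / 6; have e0 : 0 < e by rewrite divr_gt0.
    have [N HN] : exists N, forall t n, (N <= n)%N -> `|r t - c n t| <= e.
      by apply: exists_N => t; apply: cvg_eps.
    case: (fs v N) => n hn snv.
    have st := @cum_step _ _ E a s n v; rewrite snv eqxx state_eq in st.
    have h1 : c n v + rhoR E (alphaR a (c n)) v / 2 <= r v.
      by move: (cle n.+1 v); rewrite /c st.
    case: (out_att hout (alphaR a r) v) => w [Evw <-].
    case: (in_att hin (alphaR a (c n)) v) => u [Euv hu].
    have h2 := out_ge (alphaR a (c n)) Evw.
    have h3 := in_ge (alphaR a r) Euv.
    have h4 := rho_ge E (alphaR a (c n)) v.
    move: h1 h2 h3 h4; rewrite -hu.
    set rn := rhoR _ _ _; set on := alpha_out _ _ _; set ir := alpha_in _ _ _.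
    rewrite /alphaR.
    have := HN v n hn; have := HN w n hn; have := HN u n hn; rewrite !ler_norml.
    rewrite /e; lra.
  move=> v; case: (in_att hin (alphaR a r) v) => u [Euv hu]; exists u; split => // w Evw.
  by rewrite hu; apply: le_trans (oi v); apply: out_ge.
split; first exact: part1.
exact: part2 hin r0 hbal hleast v0.
Qed.
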